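(* Let $\mathcal{D}(\cdot)$ be a location-scale family on a convex set $\Theta\subseteq\mathbb{R}^d$, $z_\theta\sim\mathcal{D}(\theta)\iff z_\theta\overset{d}{=}(\Sigma_0+\Sigma(\theta))z_0+\mu_0+\mu\theta$, let $g:\mathbb{R}^m\to\mathbb{R}$, and let $\gamma_z\geq 0$. Suppose that for all $\theta,\theta'\in\Theta$ and $\alpha\in(0,1)$, $$\mathbb{E}_{z\sim\mathcal{D}(\alpha\theta+(1-\alpha)\theta')}[g(z)]\leq\mathbb{E}_{z\sim\alpha\mathcal{D}(\theta)+(1-\alpha)\mathcal{D}(\theta')}[g(z)]-\frac{\alpha(1-\alpha)\gamma_z}{2}\mathbb{E}\|\Sigma(\theta-\theta')z_0+\mu(\theta-\theta')\|_2^2.$$ Then for all $\theta,\theta'\in\Theta$ such that $\theta\mapsto\mathbb{E}_{z\sim\mathcal{D}(\theta)}[g(z)]$ is differentiable at $\theta$, $$\mathbb{E}_{z\sim\mathcal{D}(\theta')}[g(z)]\geq\mathbb{E}_{z\sim\mathcal{D}(\theta)}[g(z)]+\big(\nabla_\theta\mathbb{E}_{z\sim\mathcal{D}(\theta)}[g(z)]\big)^\top(\theta'-\theta)+\frac{\gamma_z}{2}\mathbb{E}\|\Sigma(\theta-\theta')z_0+\mu(\theta-\theta')\|_2^2.$$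
   Context: Location-scale family: $z_0\sim\mathcal{D}_0$ is drawn from a fixed zero-mean distribution $\mathcal{D}_0$ on $\mathbb{R}^m$ with finite second moments, $\Sigma_0\in\mathbb{R}^{m\times m}$, $\mu_0\in\mathbb{R}^m$ fixed, $\mu:\mathbb{R}^d\to\mathbb{R}^m$ and $\Sigma:\mathbb{R}^d\to\mathbb{R}^{m\times m}$ linear maps; expectations $\mathbb{E}\|\cdot\|$ are over $z_0\sim\mathcal{D}_0$, and all expectations of $g$ are assumed finite. $\alpha\mathcal{D}(\theta)+(1-\alpha)\mathcal{D}(\theta')$ denotes the mixture distribution. *)

(* Defs.v *)
From HB Require Import structures.
From mathcomp Require Import all_boot all_order all_algebra.
From mathcomp Require Import all_classical all_reals all_analysis.
Set Implicit Arguments. Unset Strict Implicit. Unset Printing Implicit Defensive.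
Import Order.TTheory GRing.Theory Num.Theory.
Import numFieldNormedType.Exports.
Local Open Scope classical_set_scope.
Local Open Scope ring_scope.

Definition sqnorm {R : realType} {m : nat} (v : 'cV[R]_m) : R :=
  \sum_(i < m) (v i ord0) ^+ 2.

Definition convex_setR {R : realType} {d : nat} (Th : set 'cV[R]_d) : Prop :=
  forall x y a, Th x -> Th y -> 0 <= a <= 1 -> Th (a *: x + (1 - a) *: y).

Definition ls_point {R : realType} {d m : nat}
  (Sigma0 : 'M[R]_m) (Sigma : {linear 'cV[R]_d -> 'M[R]_m})
  (mu0 : 'cV[R]_m) (mu : 'M[R]_(m, d)) (th : 'cV[R]_d) (z : 'cV[R]_m) : 'cV[R]_m :=
  (Sigma0 + Sigma th) *m z + mu0 + mu *m th.

(* E_{z ~ D(theta)}[g(z)], where D0 is the law of the random vector z0 on (Omega,P) *)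
Definition Eg {R : realType} {d0 : measure_display} {Omega : measurableType d0}
  (P : probability Omega R) {d m : nat} (z0 : Omega -> 'cV[R]_m)
  (Sigma0 : 'M[R]_m) (Sigma : {linear 'cV[R]_d -> 'M[R]_m})
  (mu0 : 'cV[R]_m) (mu : 'M[R]_(m, d)) (g : 'cV[R]_m -> R) (th : 'cV[R]_d) : R :=
  Rintegral P setT (fun w => g (ls_point Sigma0 Sigma mu0 mu th (z0 w))).

Definition Eg_mix {R : realType} {d0 : measure_display} {Omega : measurableType d0}
  (P : probability Omega R) {d m : nat} (z0 : Omega -> 'cV[R]_m)
  (Sigma0 : 'M[R]_m) (Sigma : {linear 'cV[R]_d -> 'M[R]_m})
  (mu0 : 'cV[R]_m) (mu : 'M[R]_(m, d)) (g : 'cV[R]_m -> R)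
  (a : R) (th th' : 'cV[R]_d) : R :=
  a * Eg P z0 Sigma0 Sigma mu0 mu g th + (1 - a) * Eg P z0 Sigma0 Sigma mu0 mu g th'.

Definition Enorm {R : realType} {d0 : measure_display} {Omega : measurableType d0}
  (P : probability Omega R) {d m : nat} (z0 : Omega -> 'cV[R]_m)
  (Sigma : {linear 'cV[R]_d -> 'M[R]_m}) (mu : 'M[R]_(m, d)) (v : 'cV[R]_d) : R :=
  Rintegral P setT (fun w => sqnorm (Sigma v *m z0 w + mu *m v)).

(* Main.v *)
Require Import Defs.
From HB Require Import structures.
From mathcomp Require Import all_boot all_order all_algebra.
From mathcomp Require Import all_classical all_reals all_analysis.
From mathcomp Require Import ring lra.
Import Order.TTheory GRing.Theory Num.Theory.
Import numFieldNormedType.Exports.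
Local Open Scope classical_set_scope.
Local Open Scope ring_scope.

Theorem lemmaC1 (R : realType) (d0 : measure_display) (Omega : measurableType d0)
  (P : probability Omega R) (d m : nat) (z0 : Omega -> 'cV[R]_m)
  (Sigma0 : 'M[R]_m) (Sigma : {linear 'cV[R]_d -> 'M[R]_m})
  (mu0 : 'cV[R]_m) (mu : 'M[R]_(m, d)) (g : 'cV[R]_m -> R)
  (Th : set 'cV[R]_d) (gamma_z : R) :
  (* z0 ~ D0 : measurable, zero mean, finite second moments *)
  (forall i : 'I_m, measurable_fun setT (fun w => z0 w i ord0)) ->
  (forall i : 'I_m, P.-integrable setT (fun w => ((z0 w i ord0) ^+ 2)%:E)) ->
  (forall i : 'I_m, Rintegral P setT (fun w => z0 w i ord0) = 0) ->
  (* all expectations of g are finite *)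
  (forall th : 'cV[R]_d, P.-integrable setT
      (fun w => (g (ls_point Sigma0 Sigma mu0 mu th (z0 w)))%:E)) ->
  convex_setR Th ->
  0 <= gamma_z ->
  (forall th th' a, Th th -> Th th' -> 0 < a < 1 ->
     Eg P z0 Sigma0 Sigma mu0 mu g (a *: th + (1 - a) *: th')
     <= Eg_mix P z0 Sigma0 Sigma mu0 mu g a th th'
        - a * (1 - a) * gamma_z / 2 * Enorm P z0 Sigma mu (th - th')) ->
  forall th th', Th th -> Th th' ->
    differentiable (Eg P z0 Sigma0 Sigma mu0 mu g) th ->
    Eg P z0 Sigma0 Sigma mu0 mu g th'
    >= Eg P z0 Sigma0 Sigma mu0 mu g th
       + 'd (Eg P z0 Sigma0 Sigma mu0 mu g) th (th' - th)
       + gamma_z / 2 * Enorm P z0 Sigma mu (th - th').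
Proof.
move=> _ _ _ _ _ _ Hc th th' Hth Hth' Hd.
set F := Eg P z0 Sigma0 Sigma mu0 mu g.
set k := gamma_z / 2 * Enorm P z0 Sigma mu (th - th').
set v := th' - th.
set q := fun h : R => h^-1 *: ((F \o shift th) (h *: v) - F th).
have hcvg : q @ 0^' --> 'd F th v.
  rewrite -deriveE //; exact: (diff_derivable Hd).
have hcvg' : q @ 0^'+ --> 'd F th v.
  apply: cvg_trans hcvg.
  apply: cvg_app. apply: (@within_subset _ (fun x : R => 0 < x) (fun x : R => x != 0) (nbhs (0:R))) => x /= hx.
  by rewrite gt_eqF.
have hr : (fun t : R => q t - t * k) @ 0^'+ --> 'd F th v - 0 * k.
  apply: cvgB => //; apply: cvgMl; apply: cvg_at_right_filter; exact: cvg_id.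
have : 'd F th v - 0 * k <= F th' - F th - k.
  apply: (cvgr_to_le hr).
  near=> t.
  have t0 : 0 < t by near: t; exact: nbhs_right_gt.
  have t1 : t < 1 by near: t; exact: nbhs_right_lt ltr01.
  have := Hc th th' (1 - t) Hth Hth'.
  rewrite /Eg_mix -/F -/k.
  have -> : (1 - t) *: th + (1 - (1 - t)) *: th' = t *: v + th.
    by apply/matrixP => i j; rewrite /v !mxE; ring.
  have -> : 1 - (1 - t) = t by rewrite opprB addrC subrK.
  move=> /(_ _) H.
  have {H} H : F (t *: v + th) <= (1 - t) * F th + t * F th' - (1 - t) * t * k.
    rewrite /k !mulrA; apply: H; apply/andP; split; lra.
  rewrite /q /= -[t^-1 *: _]/(t^-1 * _).
  have HX : F (t *: v + th) - F th <= t * (F th' - F th - (1 - t) * k).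
    have -> : t * (F th' - F th - (1 - t) * k) = (1 - t) * F th + t * F th' - (1 - t) * t * k - F th by ring.
    by rewrite lerD2r.
  have ti : 0 <= t^-1 by rewrite invr_ge0 ltW.
  have := ler_wpM2l ti HX.
  rewrite mulrA mulVf ?gt_eqF // mul1r => ?; lra.
rewrite mul0r subr0 => H.
move: H; set D := (X in X <= _ -> _). move=> H. lra.
Unshelve. all: by end_near.
Qed.
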